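(* Let $r_2$ be an admissible trajectory and $\tau,T,e=(e_1,e_2,e_3),u,z$ the fundamental fields on $G$. Then on $G$ $$\frac{\partial(\tau,T,e_1,e_2)}{\partial(t,x_1,x_2,x_3)}=z\,u^2\,e_3,$$ where $x_1,x_2,x_3$ are the coordinates of $r_1$. In particular this Jacobian is nonzero wherever $e_3\neq0$; analogous statements hold with $(e_1,e_2)$ replaced by any two of the three components of $e$.
   Context: Units with $c=1$. A function $r_2:\mathbb R\to\mathbb R^3$ is an admissible trajectory if it has continuous derivatives up to order 3, $|\dot r_2(t)|<1$ for all $t$, and for every $t_1$ one has $\sup_{u\le t_1}|\dot r_2(u)|<1$ and $\sup_{u\le t_1}|\ddot r_2(u)|<\infty$. The retarded time $\tau(r_1,t)$ is the unique $\tau\le t$ with $\tau=t-|r_1-r_2(\tau)|$; $T=t-\tau$; $G=\{(r_1,t):T(r_1,t)>0\}$; on $G$: $u=1/T$, $e=u(r_1-r_2(\tau))$, $v=\dot r_2\circ\tau$, $z=(1-\langle e,v\rangle)^{-1}$. *)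

(* Defs.v *)
From Stdlib Require Import Reals Lra.
Open Scope R_scope.

Record R3 := mkR3 { c1 : R; c2 : R; c3 : R }.

Definition sub3 (a b : R3) : R3 := mkR3 (c1 a - c1 b) (c2 a - c2 b) (c3 a - c3 b).
Definition scal3 (k : R) (a : R3) : R3 := mkR3 (k * c1 a) (k * c2 a) (k * c3 a).
Definition dot3 (a b : R3) : R := c1 a * c1 b + c2 a * c2 b + c3 a * c3 b.
Definition norm3 (a : R3) : R := sqrt (dot3 a a).

Definition C3_with (f f1 f2 f3 : R -> R) : Prop :=
  (forall t, derivable_pt_lim f t (f1 t)) /\
  (forall t, derivable_pt_lim f1 t (f2 t)) /\
  (forall t, derivable_pt_lim f2 t (f3 t)) /\
  continuity f3.

Definition admissible (r2 v a j : R -> R3) : Prop :=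
  C3_with (fun t => c1 (r2 t)) (fun t => c1 (v t)) (fun t => c1 (a t)) (fun t => c1 (j t)) /\
  C3_with (fun t => c2 (r2 t)) (fun t => c2 (v t)) (fun t => c2 (a t)) (fun t => c2 (j t)) /\
  C3_with (fun t => c3 (r2 t)) (fun t => c3 (v t)) (fun t => c3 (a t)) (fun t => c3 (j t)) /\
  (forall t, norm3 (v t) < 1) /\
  (forall t1, exists M, M < 1 /\ forall s, s <= t1 -> norm3 (v s) <= M) /\
  (forall t1, exists A, forall s, s <= t1 -> norm3 (a s) <= A).

(* tau is the retarded time: tau r1 t <= t and tau = t - |r1 - r2(tau)|
   (the paper shows this tau is unique). *)
Definition is_retarded_time (r2 : R -> R3) (tau : R3 -> R -> R) : Prop :=
  forall r1 t, tau r1 t <= t /\ tau r1 t = t - norm3 (sub3 r1 (r2 (tau r1 t))).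

Definition tauF (tau : R3 -> R -> R) (t x1 x2 x3 : R) : R := tau (mkR3 x1 x2 x3) t.
Definition TF (tau : R3 -> R -> R) (t x1 x2 x3 : R) : R := t - tauF tau t x1 x2 x3.
Definition uF (tau : R3 -> R -> R) (t x1 x2 x3 : R) : R := / TF tau t x1 x2 x3.
Definition eF (r2 : R -> R3) (tau : R3 -> R -> R) (t x1 x2 x3 : R) : R3 :=
  scal3 (uF tau t x1 x2 x3) (sub3 (mkR3 x1 x2 x3) (r2 (tauF tau t x1 x2 x3))).
Definition zF (r2 v : R -> R3) (tau : R3 -> R -> R) (t x1 x2 x3 : R) : R :=
  / (1 - dot3 (eF r2 tau t x1 x2 x3) (v (tauF tau t x1 x2 x3))).

Definition partial4 (g : R -> R -> R -> R -> R) (k : nat) (t x1 x2 x3 l : R) : Prop :=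
  match k with
  | O => derivable_pt_lim (fun s => g s x1 x2 x3) t l
  | 1%nat => derivable_pt_lim (fun s => g t s x2 x3) x1 l
  | 2%nat => derivable_pt_lim (fun s => g t x1 s x3) x2 l
  | 3%nat => derivable_pt_lim (fun s => g t x1 x2 s) x3 l
  | _ => False
  end.

Definition det3 (a b c d e f g h i : R) : R :=
  a * (e * i - f * h) - b * (d * i - f * g) + c * (d * h - e * g).

Definition det4 (M : nat -> nat -> R) : R :=
  M 0%nat 0%nat * det3 (M 1%nat 1%nat) (M 1%nat 2%nat) (M 1%nat 3%nat)
                       (M 2%nat 1%nat) (M 2%nat 2%nat) (M 2%nat 3%nat)
                       (M 3%nat 1%nat) (M 3%nat 2%nat) (M 3%nat 3%nat)
  - M 0%nat 1%nat * det3 (M 1%nat 0%nat) (M 1%nat 2%nat) (M 1%nat 3%nat)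
                       (M 2%nat 0%nat) (M 2%nat 2%nat) (M 2%nat 3%nat)
                       (M 3%nat 0%nat) (M 3%nat 2%nat) (M 3%nat 3%nat)
  + M 0%nat 2%nat * det3 (M 1%nat 0%nat) (M 1%nat 1%nat) (M 1%nat 3%nat)
                       (M 2%nat 0%nat) (M 2%nat 1%nat) (M 2%nat 3%nat)
                       (M 3%nat 0%nat) (M 3%nat 1%nat) (M 3%nat 3%nat)
  - M 0%nat 3%nat * det3 (M 1%nat 0%nat) (M 1%nat 1%nat) (M 1%nat 2%nat)
                       (M 2%nat 0%nat) (M 2%nat 1%nat) (M 2%nat 2%nat)
                       (M 3%nat 0%nat) (M 3%nat 1%nat) (M 3%nat 2%nat).

Definition jacF (r2 : R -> R3) (tau : R3 -> R -> R) (i : nat) : R -> R -> R -> R -> R :=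
  match i with
  | O => tauF tau
  | 1%nat => TF tau
  | 2%nat => fun t x1 x2 x3 => c1 (eF r2 tau t x1 x2 x3)
  | _ => fun t x1 x2 x3 => c2 (eF r2 tau t x1 x2 x3)
  end.

(* Main.v *)
Require Import Defs.
From Stdlib Require Import Reals Lra Lia Psatz.
Require Import Defs.
Open Scope R_scope.

Lemma dot3_nonneg a : 0 <= dot3 a a.
Proof. unfold dot3; nra. Qed.
Lemma norm3_nonneg a : 0 <= norm3 a.
Proof. unfold norm3; apply sqrt_pos. Qed.
Lemma norm3_sq a : norm3 a * norm3 a = dot3 a a.
Proof. unfold norm3; apply sqrt_sqrt, dot3_nonneg. Qed.

Lemma CS_sq a b : dot3 a b * dot3 a b <= dot3 a a * dot3 b b.
Proof.
  destruct a as [a1 a2 a3], b as [b1 b2 b3]; unfold dot3; simpl.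
  assert (E : (a1*a1+a2*a2+a3*a3)*(b1*b1+b2*b2+b3*b3) - (a1*b1+a2*b2+a3*b3)*(a1*b1+a2*b2+a3*b3)
     = (a1*b2-a2*b1)^2 + (a1*b3-a3*b1)^2 + (a2*b3-a3*b2)^2) by ring.
  assert (0 <= (a1*b2-a2*b1)^2 + (a1*b3-a3*b1)^2 + (a2*b3-a3*b2)^2).
  { repeat apply Rplus_le_le_0_compat; apply pow2_ge_0. }
  lra.
Qed.

Lemma CS a b : Rabs (dot3 a b) <= norm3 a * norm3 b.
Proof.
  pose proof (CS_sq a b). rewrite <- !norm3_sq in H.
  pose proof (norm3_nonneg a); pose proof (norm3_nonneg b).
  rewrite <- (Rabs_right (norm3 a * norm3 b)) by nra.
  apply Rsqr_le_abs_0. unfold Rsqr. nra.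
Qed.

Lemma norm3_sub_le p q : norm3 (sub3 p q) <= norm3 p + norm3 q.
Proof.
  pose proof (norm3_sq (sub3 p q)) as E.
  assert (dot3 (sub3 p q) (sub3 p q) = dot3 p p - 2 * dot3 p q + dot3 q q)
    by (unfold dot3, sub3; simpl; ring).
  pose proof (CS p q). pose proof (norm3_sq p). pose proof (norm3_sq q).
  pose proof (norm3_nonneg p); pose proof (norm3_nonneg q); pose proof (norm3_nonneg (sub3 p q)).
  pose proof (Rle_abs (- dot3 p q)) as HA. rewrite Rabs_Ropp in HA.
  assert (HB : dot3 (sub3 p q) (sub3 p q) <= (norm3 p + norm3 q) * (norm3 p + norm3 q)) by nra.
  rewrite <- E in HB. nra.
Qed.

Lemma norm3_sub_sym p q : norm3 (sub3 p q) = norm3 (sub3 q p).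
Proof. unfold norm3; f_equal; unfold dot3, sub3; simpl; ring. Qed.

Lemma norm3_rev p q : Rabs (norm3 p - norm3 q) <= norm3 (sub3 p q).
Proof.
  assert (H1 : norm3 p <= norm3 (sub3 p q) + norm3 q).
  { pose proof (norm3_sub_le (sub3 p q) (mkR3 (- c1 q) (- c2 q) (- c3 q))).
    replace (sub3 (sub3 p q) (mkR3 (- c1 q) (- c2 q) (- c3 q))) with p in H
      by (destruct p; destruct q; unfold sub3; simpl; f_equal; ring).
    replace (norm3 (mkR3 (- c1 q) (- c2 q) (- c3 q))) with (norm3 q) in H
      by (unfold norm3, dot3; simpl; f_equal; ring). lra. }
  assert (H2 : norm3 q <= norm3 (sub3 q p) + norm3 p).
  { pose proof (norm3_sub_le (sub3 q p) (mkR3 (- c1 p) (- c2 p) (- c3 p))).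
    replace (sub3 (sub3 q p) (mkR3 (- c1 p) (- c2 p) (- c3 p))) with q in H
      by (destruct p; destruct q; unfold sub3; simpl; f_equal; ring).
    replace (norm3 (mkR3 (- c1 p) (- c2 p) (- c3 p))) with (norm3 p) in H
      by (unfold norm3, dot3; simpl; f_equal; ring). lra. }
  rewrite (norm3_sub_sym q p) in H2. apply Rabs_le; lra.
Qed.

Lemma norm3_le_sum w : norm3 w <= Rabs (c1 w) + Rabs (c2 w) + Rabs (c3 w).
Proof.
  pose proof (norm3_sq w); pose proof (norm3_nonneg w).
  pose proof (Rabs_pos (c1 w)); pose proof (Rabs_pos (c2 w)); pose proof (Rabs_pos (c3 w)).
  assert (dot3 w w = Rabs (c1 w) * Rabs (c1 w) + Rabs (c2 w) * Rabs (c2 w) + Rabs (c3 w) * Rabs (c3 w)).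
  { unfold dot3; rewrite <- !Rabs_mult, !Rabs_right; try lra; apply Rle_ge; nra. }
  nra.
Qed.

Lemma comp_le_norm1 w : Rabs (c1 w) <= norm3 w.
Proof. pose proof (norm3_sq w); pose proof (norm3_nonneg w). unfold dot3 in H.
  apply Rabs_le; split; nra. Qed.
Lemma comp_le_norm2 w : Rabs (c2 w) <= norm3 w.
Proof. pose proof (norm3_sq w); pose proof (norm3_nonneg w). unfold dot3 in H.
  apply Rabs_le; split; nra. Qed.
Lemma comp_le_norm3 w : Rabs (c3 w) <= norm3 w.
Proof. pose proof (norm3_sq w); pose proof (norm3_nonneg w). unfold dot3 in H.
  apply Rabs_le; split; nra. Qed.

Lemma dlin (f1 f2 f3 : R -> R) l1 l2 l3 d1 d2 d3 x :
  derivable_pt_lim f1 x l1 -> derivable_pt_lim f2 x l2 -> derivable_pt_lim f3 x l3 ->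
  derivable_pt_lim (fun s => f1 s * d1 + f2 s * d2 + f3 s * d3) x (l1 * d1 + l2 * d2 + l3 * d3).
Proof.
  intros H1 H2 H3.
  assert (K : forall f l d, derivable_pt_lim f x l -> derivable_pt_lim (fun s => f s * d) x (l * d)).
  { intros f l d H. replace (l * d) with (l * fct_cte d x + f x * 0) by (unfold fct_cte; ring).
    apply (derivable_pt_lim_mult f (fct_cte d)); auto. apply derivable_pt_lim_const. }
  apply (derivable_pt_lim_plus (fun s => f1 s * d1 + f2 s * d2) (fun s => f3 s * d3)); auto.
  apply (derivable_pt_lim_plus (fun s => f1 s * d1) (fun s => f2 s * d2)); auto.
Qed.

Lemma lip r2 v a j : admissible r2 v a j -> forall t1 M,
  (forall s, s <= t1 -> norm3 (v s) <= M) ->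
  forall x y, x <= t1 -> y <= t1 -> norm3 (sub3 (r2 x) (r2 y)) <= M * Rabs (x - y).
Proof.
  intros [[D1 _] [[D2 _] [[D3 _] _]]] t1 M HM.
  assert (key : forall x y, x < y -> y <= t1 -> norm3 (sub3 (r2 y) (r2 x)) <= M * (y - x)).
  { intros x y Hxy Hy.
    set (d := sub3 (r2 y) (r2 x)).
    destruct (MVT_cor2 (fun s => c1 (r2 s) * c1 d + c2 (r2 s) * c2 d + c3 (r2 s) * c3 d)
                       (fun s => dot3 (v s) d) x y Hxy) as [c [Hc Hc2]].
    { intros c _. apply dlin; auto. }
    assert (E : dot3 d d = dot3 (v c) d * (y - x)).
    { rewrite <- Hc. unfold d, dot3, sub3; simpl. ring. }
    pose proof (CS (v c) d). pose proof (HM c ltac:(lra)).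
    pose proof (norm3_sq d). pose proof (norm3_nonneg d). pose proof (norm3_nonneg (v c)).
    pose proof (Rle_abs (dot3 (v c) d)).
    assert (norm3 d * norm3 d <= M * norm3 d * (y - x)).
    { rewrite H1, E.
      apply Rle_trans with (Rabs (dot3 (v c) d) * (y - x)).
      apply Rmult_le_compat_r; lra.
      apply Rle_trans with (norm3 (v c) * norm3 d * (y - x)).
      apply Rmult_le_compat_r; lra.
      apply Rmult_le_compat_r; [lra|]. apply Rmult_le_compat_r; lra. }
    destruct (Req_dec (norm3 d) 0). { rewrite H6. nra. }
    apply (Rmult_le_reg_l (norm3 d)). lra. nra. }
  intros x y Hx Hy. destruct (Rtotal_order x y) as [H|[H|H]].
  - rewrite norm3_sub_sym. rewrite Rabs_minus_sym, Rabs_right by lra. auto.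
  - subst. unfold norm3, dot3, sub3; simpl. replace (_ + _) with 0 by ring.
    rewrite sqrt_0. pose proof (HM y Hy). pose proof (norm3_nonneg (v y)).
    pose proof (Rabs_pos (y - y)). nra.
  - rewrite Rabs_right by lra. auto.
Qed.

Lemma abs_prod_le x y X Y : Rabs x <= X -> Rabs y <= Y -> Rabs (x * y) <= X * Y.
Proof. intros. rewrite Rabs_mult. pose proof (Rabs_pos x); pose proof (Rabs_pos y).
  apply Rmult_le_compat; auto. Qed.

Lemma sq_le x X : Rabs x <= X -> x ^ 2 <= X ^ 2.
Proof. intros. pose proof (Rabs_pos x). replace (x^2) with (Rabs x * Rabs x).
  simpl. rewrite Rmult_1_r. apply Rmult_le_compat; auto.
  rewrite <- Rabs_mult. simpl. rewrite Rmult_1_r. apply Rabs_right. apply Rle_ge; nra. Qed.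

Lemma abs_sub_le x y X Y : Rabs x <= X -> Rabs y <= Y -> Rabs (x - y) <= X + Y.
Proof. intros. unfold Rminus. eapply Rle_trans. apply Rabs_triang. rewrite Rabs_Ropp. lra. Qed.

Lemma alg_bound (T0 c h D al b1 b2 b3 e1 e2 e3 v1 v2 v3 R1 R2 R3 K eta l: R) :
  T0 > 0 -> c > 0 -> c = 1 - (e1*v1 + e2*v2 + e3*v3) ->
  l = (al - (e1*b1 + e2*b2 + e3*b3)) / c ->
  (T0 + al*h - D)^2 = (T0*e1 + b1*h - R1)^2 + (T0*e2 + b2*h - R2)^2 + (T0*e3 + b3*h - R3)^2 ->
  T0^2 = (T0*e1)^2 + (T0*e2)^2 + (T0*e3)^2 ->
  h <> 0 -> Rabs D <= K * Rabs h ->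
  Rabs R1 <= K * Rabs h -> Rabs R2 <= K * Rabs h -> Rabs R3 <= K * Rabs h ->
  Rabs (R1 - v1*D) <= eta * Rabs D -> Rabs (R2 - v2*D) <= eta * Rabs D ->
  Rabs (R3 - v3*D) <= eta * Rabs D -> 0 <= eta ->
  Rabs (D/h - l) <= (2*T0*(Rabs e1 + Rabs e2 + Rabs e3)*eta*K
     + ((Rabs al + K)^2 + (Rabs b1 + K)^2 + (Rabs b2 + K)^2 + (Rabs b3 + K)^2) * Rabs h) / (2*T0*c).
Proof.
  intros HT Hc Hcd Hl E1 E0 Hh HD HR1 HR2 HR3 Hr1 Hr2 Hr3 Heta.
  set (Err := 2*T0*(e1*(R1 - v1*D) + e2*(R2 - v2*D) + e3*(R3 - v3*D)) + (al*h - D)^2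
              - ((b1*h - R1)^2 + (b2*h - R2)^2 + (b3*h - R3)^2)).
  assert (Hid : 2*T0*(c*D - (al - (e1*b1 + e2*b2 + e3*b3))*h) = Err).
  { unfold Err. rewrite Hcd. nra. }
  assert (Hq : D/h - l = Err / (2*T0*c*h)).
  { rewrite Hl, <- Hid. field. lra. }
  rewrite Hq. pose proof (Rabs_pos h) as Hh0. pose proof (Rabs_pos D).
  assert (Hah : Rabs h > 0) by (apply Rabs_pos_lt; auto).
  assert (K0 : 0 <= K) by (apply Rmult_le_reg_r with (Rabs h); nra).
  assert (BE : Rabs Err <= (2*T0*(Rabs e1 + Rabs e2 + Rabs e3)*eta*K
     + ((Rabs al + K)^2 + (Rabs b1 + K)^2 + (Rabs b2 + K)^2 + (Rabs b3 + K)^2) * Rabs h) * Rabs h).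
  { unfold Err.
    assert (A1 : Rabs (e1*(R1 - v1*D) + e2*(R2 - v2*D) + e3*(R3 - v3*D))
               <= (Rabs e1 + Rabs e2 + Rabs e3) * (eta * (K * Rabs h))).
    { assert (eta * Rabs D <= eta * (K * Rabs h)) by (apply Rmult_le_compat_l; lra).
      eapply Rle_trans. apply Rabs_triang. eapply Rle_trans. apply Rplus_le_compat_r. apply Rabs_triang.
      pose proof (abs_prod_le e1 (R1 - v1*D) (Rabs e1) (eta * (K * Rabs h)) (Rle_refl _) ltac:(lra)).
      pose proof (abs_prod_le e2 (R2 - v2*D) (Rabs e2) (eta * (K * Rabs h)) (Rle_refl _) ltac:(lra)).
      pose proof (abs_prod_le e3 (R3 - v3*D) (Rabs e3) (eta * (K * Rabs h)) (Rle_refl _) ltac:(lra)).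
      lra. }
    assert (A2 : (al*h - D)^2 <= ((Rabs al + K) * Rabs h)^2).
    { apply sq_le. replace ((Rabs al + K) * Rabs h) with (Rabs al * Rabs h + K * Rabs h) by ring.
      apply abs_sub_le; auto. rewrite Rabs_mult; lra. }
    assert (A3 : forall b R, Rabs R <= K * Rabs h -> 0 <= (b*h - R)^2 <= ((Rabs b + K) * Rabs h)^2).
    { intros b R HR. split. apply pow2_ge_0. apply sq_le.
      replace ((Rabs b + K) * Rabs h) with (Rabs b * Rabs h + K * Rabs h) by ring.
      apply abs_sub_le; auto. rewrite Rabs_mult; lra. }
    pose proof (A3 b1 R1 HR1); pose proof (A3 b2 R2 HR2); pose proof (A3 b3 R3 HR3).
    pose proof (pow2_ge_0 (al*h - D)).
    set (S := (b1 * h - R1) ^ 2 + (b2 * h - R2) ^ 2 + (b3 * h - R3) ^ 2) in *.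
    set (Z := e1*(R1 - v1*D) + e2*(R2 - v2*D) + e3*(R3 - v3*D)) in *.
    assert (Rabs (2*T0*Z) <= 2*T0*((Rabs e1 + Rabs e2 + Rabs e3) * (eta * (K * Rabs h)))).
    { rewrite Rabs_mult, (Rabs_right (2*T0)) by lra. apply Rmult_le_compat_l; lra. }
    assert (Rabs ((al*h - D)^2 - S) <= ((Rabs al + K) * Rabs h)^2 + (((Rabs b1 + K) * Rabs h)^2
       + ((Rabs b2 + K) * Rabs h)^2 + ((Rabs b3 + K) * Rabs h)^2)).
    { apply abs_sub_le; rewrite Rabs_right; try lra; unfold S; lra. }
    unfold Rminus at 1. rewrite Rplus_assoc. eapply Rle_trans. apply Rabs_triang.
    fold (Rminus ((al * h - D) ^ 2) S).
    eapply Rle_trans. apply Rplus_le_compat; eassumption. right; ring. }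
  unfold Rdiv. rewrite Rabs_mult, Rabs_inv.
  rewrite (Rabs_mult (2*T0*c)), (Rabs_right (2*T0*c)) by nra.
  rewrite Rinv_mult.
  apply Rle_trans with (((2*T0*(Rabs e1 + Rabs e2 + Rabs e3)*eta*K
     + ((Rabs al + K)^2 + (Rabs b1 + K)^2 + (Rabs b2 + K)^2 + (Rabs b3 + K)^2) * Rabs h) * Rabs h)
      * (/ (2*T0*c) * / Rabs h)).
  apply Rmult_le_compat_r; auto. 
  apply Rmult_le_pos; left; apply Rinv_0_lt_compat; nra.
  right. field. split; lra.
Qed.

Lemma dpl_est f x l : derivable_pt_lim f x l -> forall eta, eta > 0 ->
  exists delta, delta > 0 /\ forall D, Rabs D < delta -> Rabs (f (x+D) - f x - l*D) <= eta * Rabs D.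
Proof.
  intros H eta He. destruct (H eta He) as [del Hd]. exists del. split. apply cond_pos.
  intros D HD. destruct (Req_dec D 0) as [->|HD0].
  - rewrite Rplus_0_r. replace (f x - f x - l*0) with 0 by ring. rewrite Rabs_R0. lra.
  - pose proof (Hd D HD0 HD).
    replace (f (x+D) - f x - l*D) with (((f (x + D) - f x) / D - l) * D) by (field; auto).
    rewrite Rabs_mult. apply Rmult_le_compat_r. apply Rabs_pos. lra.
Qed.

Lemma core r2 v a j tau : admissible r2 v a j -> is_retarded_time r2 tau ->
  forall (tt : R -> R) (xx : R -> R3) t0 y1 y2 y3 p0 al b1 b2 b3,
  (forall p, tt p = t0 + al * (p - p0)) ->
  (forall p, xx p = mkR3 (y1 + b1 * (p - p0)) (y2 + b2 * (p - p0)) (y3 + b3 * (p - p0))) ->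
  t0 - tau (mkR3 y1 y2 y3) t0 > 0 ->
  derivable_pt_lim (fun p => tau (xx p) (tt p)) p0
    (/ (1 - dot3 (scal3 (/ (t0 - tau (mkR3 y1 y2 y3) t0))
                    (sub3 (mkR3 y1 y2 y3) (r2 (tau (mkR3 y1 y2 y3) t0))))
                 (v (tau (mkR3 y1 y2 y3) t0)))
     * (al - (c1 (scal3 (/ (t0 - tau (mkR3 y1 y2 y3) t0))
                    (sub3 (mkR3 y1 y2 y3) (r2 (tau (mkR3 y1 y2 y3) t0)))) * b1
            + c2 (scal3 (/ (t0 - tau (mkR3 y1 y2 y3) t0))
                    (sub3 (mkR3 y1 y2 y3) (r2 (tau (mkR3 y1 y2 y3) t0)))) * b2
            + c3 (scal3 (/ (t0 - tau (mkR3 y1 y2 y3) t0))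
                    (sub3 (mkR3 y1 y2 y3) (r2 (tau (mkR3 y1 y2 y3) t0)))) * b3))).
Proof.
  intros adm ret tt xx t0 y1 y2 y3 p0 al b1 b2 b3 Htt Hxx HT.
  pose proof adm as [[D1 _] [[D2 _] [[D3 _] [Hv [HMb _]]]]].
  set (Y := mkR3 y1 y2 y3) in *.
  set (s0 := tau Y t0) in *.
  set (T0 := t0 - s0) in *.
  set (d := sub3 Y (r2 s0)).
  set (e := scal3 (/ T0) d) in *.
  set (vv := v s0) in *.
  set (phi := fun p => tau (xx p) (tt p)).
  assert (Hs0 : phi p0 = s0).
  { unfold phi. assert (tt p0 = t0) as -> by (rewrite Htt; ring).
    assert (xx p0 = Y) as -> by (rewrite Hxx; unfold Y; f_equal; ring). reflexivity. }
  destruct (ret Y t0) as [_ Hret0]. fold s0 in Hret0.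
  assert (HT0 : T0 = norm3 d) by (unfold T0, d; lra).
  assert (He1 : T0 * c1 e = c1 d) by (unfold e, scal3; simpl; field; lra).
  assert (He2 : T0 * c2 e = c2 d) by (unfold e, scal3; simpl; field; lra).
  assert (He3 : T0 * c3 e = c3 d) by (unfold e, scal3; simpl; field; lra).
  assert (E0 : T0^2 = (T0 * c1 e)^2 + (T0 * c2 e)^2 + (T0 * c3 e)^2).
  { rewrite He1, He2, He3, HT0. replace (norm3 d ^2) with (norm3 d * norm3 d) by ring.
    rewrite norm3_sq. unfold dot3. ring. }
  assert (Hee : dot3 e e = 1).
  { unfold dot3. apply (Rmult_eq_reg_l (T0^2)). rewrite Rmult_1_r. rewrite E0 at 2. ring.
    apply pow_nonzero. lra. }
  set (c := 1 - dot3 e vv).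
  assert (Hc : c > 0).
  { unfold c. pose proof (CS_sq e vv). rewrite Hee in H. rewrite <- norm3_sq in H.
    pose proof (Hv s0). fold vv in H0. pose proof (norm3_nonneg vv). nra. }
  set (t1 := t0 + Rabs al).
  destruct (HMb t1) as [M [HM1 HM]].
  pose proof (lip r2 v a j adm t1 M HM) as Lip.
  assert (HM0 : 0 <= M). { pose proof (HM t1 (Rle_refl _)). pose proof (norm3_nonneg (v t1)). lra. }
  set (K := (Rabs al + Rabs b1 + Rabs b2 + Rabs b3) / (1 - M)).
  assert (K0 : 0 <= K).
  { unfold K. apply Rmult_le_pos. pose proof (Rabs_pos al); pose proof (Rabs_pos b1);
    pose proof (Rabs_pos b2); pose proof (Rabs_pos b3). lra. left; apply Rinv_0_lt_compat; lra. }
  assert (Heqh : forall h, phi (p0 + h) <= t0 + al*h /\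
     phi (p0 + h) = t0 + al*h - norm3 (sub3 (mkR3 (y1 + b1*h) (y2 + b2*h) (y3 + b3*h)) (r2 (phi (p0+h))))).
  { intros h. destruct (ret (xx (p0+h)) (tt (p0+h))) as [A B]. unfold phi.
    rewrite Hxx, Htt in *. replace (p0 + h - p0) with h in * by ring. auto. }
  assert (Step1 : forall h, Rabs h <= 1 -> Rabs (phi (p0 + h) - s0) <= K * Rabs h).
  { intros h Hh. destruct (Heqh h) as [A B].
    set (s := phi (p0+h)) in *.
    set (Dp := sub3 (mkR3 (y1 + b1*h) (y2 + b2*h) (y3 + b3*h)) (r2 s)) in *.
    assert (Hs1 : s <= t1).
    { unfold t1. pose proof (Rle_abs (al*h)). rewrite Rabs_mult in H.
      pose proof (Rabs_pos al). pose proof (Rabs_pos h). nra. }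
    assert (Hs01 : s0 <= t1). { unfold t1. pose proof (Rabs_pos al). unfold T0 in HT. lra. }
    assert (V : sub3 Dp d = sub3 (mkR3 (b1*h) (b2*h) (b3*h)) (sub3 (r2 s) (r2 s0))).
    { unfold Dp, d, Y, sub3; simpl. f_equal; ring. }
    pose proof (norm3_rev Dp d) as R1. rewrite V in R1.
    pose proof (norm3_sub_le (mkR3 (b1*h) (b2*h) (b3*h)) (sub3 (r2 s) (r2 s0))) as R2.
    pose proof (norm3_le_sum (mkR3 (b1*h) (b2*h) (b3*h))) as R3. simpl in R3.
    rewrite !Rabs_mult in R3.
    pose proof (Lip s s0 Hs1 Hs01) as R4.
    assert (EQ : s - s0 = al * h - (norm3 Dp - norm3 d)) by (rewrite <- HT0; unfold T0; lra).
    assert (R5 : Rabs (s - s0) <= Rabs al * Rabs h + (Rabs b1 + Rabs b2 + Rabs b3) * Rabs h + M * Rabs (s - s0)).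
    { rewrite EQ at 1. eapply Rle_trans. apply abs_sub_le. rewrite Rabs_mult. apply Rle_refl. apply Rle_refl.
      lra. }
    unfold K. apply (Rmult_le_reg_l (1 - M)). lra.
    replace ((1 - M) * ((Rabs al + Rabs b1 + Rabs b2 + Rabs b3) / (1 - M) * Rabs h))
      with ((Rabs al + Rabs b1 + Rabs b2 + Rabs b3) * Rabs h) by (field; lra). lra. }
  intros eps Heps.
  set (P := 2 * T0 * (Rabs (c1 e) + Rabs (c2 e) + Rabs (c3 e)) * K).
  set (Q := (Rabs al + K)^2 + (Rabs b1 + K)^2 + (Rabs b2 + K)^2 + (Rabs b3 + K)^2).
  assert (P0 : 0 <= P).
  { unfold P. pose proof (Rabs_pos (c1 e)); pose proof (Rabs_pos (c2 e)); pose proof (Rabs_pos (c3 e)).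
    apply Rmult_le_pos; try lra. apply Rmult_le_pos; lra. }
  assert (Q0 : 0 <= Q) by (unfold Q; pose proof (pow2_ge_0 (Rabs al + K)); pose proof (pow2_ge_0 (Rabs b1 + K));
     pose proof (pow2_ge_0 (Rabs b2 + K)); pose proof (pow2_ge_0 (Rabs b3 + K)); lra).
  assert (T0p : T0 > 0) by (unfold T0 in *; lra).
  set (eta := eps * T0 * c / (P + 1)).
  assert (Heta : eta > 0) by (unfold eta; apply Rdiv_lt_0_compat; [repeat apply Rmult_lt_0_compat|]; lra).
  destruct (dpl_est _ _ _ (D1 s0) eta Heta) as [d1 [Hd1 Ed1]].
  destruct (dpl_est _ _ _ (D2 s0) eta Heta) as [d2 [Hd2 Ed2]].
  destruct (dpl_est _ _ _ (D3 s0) eta Heta) as [d3 [Hd3 Ed3]].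
  set (dm := Rmin d1 (Rmin d2 d3)).
  assert (Hdm : dm > 0) by (unfold dm; repeat apply Rmin_pos; lra).
  set (hq := eps * T0 * c / (Q + 1)).
  assert (Hhq : hq > 0) by (unfold hq; apply Rdiv_lt_0_compat; [repeat apply Rmult_lt_0_compat|]; lra).
  assert (Hdel : 0 < Rmin 1 (Rmin (dm / (K + 1)) hq)).
  { repeat apply Rmin_pos; try lra. apply Rdiv_lt_0_compat; lra. }
  exists (mkposreal _ Hdel). simpl. intros h Hh0 Hhd.
  assert (Hh1 : Rabs h <= 1) by (pose proof (Rmin_l 1 (Rmin (dm / (K + 1)) hq)); lra).
  assert (Hh2 : Rabs h < dm / (K + 1)) by
    (pose proof (Rmin_r 1 (Rmin (dm / (K + 1)) hq)); pose proof (Rmin_l (dm / (K + 1)) hq); lra).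
  assert (Hh3 : Rabs h < hq) by
    (pose proof (Rmin_r 1 (Rmin (dm / (K + 1)) hq)); pose proof (Rmin_r (dm / (K + 1)) hq); lra).
  rewrite Hs0.
  pose proof (Step1 h Hh1) as S1.
  destruct (Heqh h) as [A B].
  set (s := phi (p0+h)) in *.
  set (D := s - s0) in *.
  assert (HDdm : Rabs D < dm).
  { apply Rle_lt_trans with (K * Rabs h). auto.
    apply Rle_lt_trans with (K * (dm / (K+1))). apply Rmult_le_compat_l; lra.
    assert (dm / (K+1) * (K+1) = dm) by (field; lra).
    assert (0 < dm / (K+1)) by (apply Rdiv_lt_0_compat; lra). nra. }
  assert (Hsd : s = s0 + D) by (unfold D; ring).
  assert (Hnr : norm3 (sub3 (r2 s) (r2 s0)) <= K * Rabs h).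
  { assert (Hs1 : s <= t1).
    { unfold t1. pose proof (Rle_abs (al*h)). rewrite Rabs_mult in H.
      pose proof (Rabs_pos al). pose proof (Rabs_pos h). nra. }
    assert (Hs01 : s0 <= t1). { unfold t1. pose proof (Rabs_pos al). unfold T0 in HT. lra. }
    pose proof (Lip s s0 Hs1 Hs01). fold D in H. pose proof (Rabs_pos D). nra. }
  pose proof (comp_le_norm1 (sub3 (r2 s) (r2 s0))) as N1.
  pose proof (comp_le_norm2 (sub3 (r2 s) (r2 s0))) as N2.
  pose proof (comp_le_norm3 (sub3 (r2 s) (r2 s0))) as N3.
  simpl in N1, N2, N3.
  assert (X1 := Ed1 D ltac:(unfold dm in HDdm; pose proof (Rmin_l d1 (Rmin d2 d3)); lra)).
  assert (X2 := Ed2 D ltac:(unfold dm in HDdm; pose proof (Rmin_r d1 (Rmin d2 d3)); pose proof (Rmin_l d2 d3); lra)).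
  assert (X3 := Ed3 D ltac:(unfold dm in HDdm; pose proof (Rmin_r d1 (Rmin d2 d3)); pose proof (Rmin_r d2 d3); lra)).
  cbv beta in X1, X2, X3. rewrite <- Hsd in X1, X2, X3.
  assert (Hbd := alg_bound T0 c h D al b1 b2 b3 (c1 e) (c2 e) (c3 e) (c1 vv) (c2 vv) (c3 vv)
    (c1 (r2 s) - c1 (r2 s0)) (c2 (r2 s) - c2 (r2 s0)) (c3 (r2 s) - c3 (r2 s0)) K eta
    (/ c * (al - (c1 e * b1 + c2 e * b2 + c3 e * b3)))
    T0p Hc ltac:(unfold c, dot3; ring) ltac:(unfold Rdiv; ring)).
  assert (E1 : (T0 + al * h - D) ^ 2 =
     (T0 * c1 e + b1 * h - (c1 (r2 s) - c1 (r2 s0))) ^ 2 +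
     (T0 * c2 e + b2 * h - (c2 (r2 s) - c2 (r2 s0))) ^ 2 +
     (T0 * c3 e + b3 * h - (c3 (r2 s) - c3 (r2 s0))) ^ 2).
  { rewrite He1, He2, He3. unfold d, Y, sub3; simpl c1; simpl c2; simpl c3.
    replace (T0 + al * h - D) with (norm3 (sub3 (mkR3 (y1 + b1 * h) (y2 + b2 * h) (y3 + b3 * h)) (r2 s)))
      by (unfold D, T0; lra).
    replace (norm3 (sub3 (mkR3 (y1 + b1 * h) (y2 + b2 * h) (y3 + b3 * h)) (r2 s)) ^ 2) with
      (norm3 (sub3 (mkR3 (y1 + b1 * h) (y2 + b2 * h) (y3 + b3 * h)) (r2 s)) *
       norm3 (sub3 (mkR3 (y1 + b1 * h) (y2 + b2 * h) (y3 + b3 * h)) (r2 s))) by ring.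
    rewrite norm3_sq. unfold dot3, sub3; simpl. ring. }
  specialize (Hbd E1 E0 Hh0 S1 ltac:(lra) ltac:(lra) ltac:(lra) X1 X2 X3 ltac:(lra)).
  eapply Rle_lt_trans. exact Hbd.
  fold Q.
  apply (Rmult_lt_reg_r (2 * T0 * c)). nra.
  unfold Rdiv. rewrite Rmult_assoc, Rinv_l, Rmult_1_r by nra.
  assert (PE : 2 * T0 * (Rabs (c1 e) + Rabs (c2 e) + Rabs (c3 e)) * eta * K = P * eta) by (unfold P; ring).
  rewrite PE.
  assert (A1 : P * eta <= eps * T0 * c).
  { unfold eta. replace (P * (eps * T0 * c / (P + 1))) with ((eps * T0 * c) * (P / (P + 1))) by (field; lra).
    assert (P / (P+1) <= 1). { apply (Rmult_le_reg_r (P+1)). lra. unfold Rdiv. rewrite Rmult_assoc, Rinv_l by lra. lra. }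
    assert (0 < eps * T0 * c) by (repeat apply Rmult_lt_0_compat; lra). nra. }
  assert (A2 : Q * Rabs h < eps * T0 * c).
  { apply Rle_lt_trans with (Q * hq). apply Rmult_le_compat_l; lra.
    unfold hq. replace (Q * (eps * T0 * c / (Q + 1))) with ((eps * T0 * c) * (Q / (Q + 1))) by (field; lra).
    assert (Q / (Q+1) < 1). { apply (Rmult_lt_reg_r (Q+1)). lra. unfold Rdiv. rewrite Rmult_assoc, Rinv_l by lra. lra. }
    assert (0 < eps * T0 * c) by (repeat apply Rmult_lt_0_compat; lra). nra. }
  lra.
Qed.

Lemma dpl_ext (f g : R -> R) x l : (forall y, f y = g y) -> derivable_pt_lim f x l -> derivable_pt_lim g x l.
Proof. intros E H eps He. destruct (H eps He) as [d Hd]. exists d. intros h H1 H2.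
  rewrite <- !E. auto. Qed.

Lemma dpl_val (f : R -> R) x l l' : derivable_pt_lim f x l -> l = l' -> derivable_pt_lim f x l'.
Proof. intros H ->; auto. Qed.

Lemma daff c k p0 x : derivable_pt_lim (fun p => c + k * (p - p0)) x k.
Proof. intros eps He. exists (mkposreal 1 Rlt_0_1). intros h H1 H2.
  replace ((c + k * (x + h - p0) - (c + k * (x - p0))) / h - k) with 0 by (field; auto).
  rewrite Rabs_R0; lra. Qed.

Lemma dir_all r2 v a j tau : admissible r2 v a j -> is_retarded_time r2 tau ->
  forall (tt : R -> R) (xx : R -> R3) t0 y1 y2 y3 p0 al b1 b2 b3,
  (forall p, tt p = t0 + al * (p - p0)) ->
  (forall p, xx p = mkR3 (y1 + b1 * (p - p0)) (y2 + b2 * (p - p0)) (y3 + b3 * (p - p0))) ->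
  TF tau t0 y1 y2 y3 > 0 ->
  let z := zF r2 v tau t0 y1 y2 y3 in
  let u := uF tau t0 y1 y2 y3 in
  let e := eF r2 tau t0 y1 y2 y3 in
  let vv := v (tauF tau t0 y1 y2 y3) in
  let ph := z * (al - (c1 e * b1 + c2 e * b2 + c3 e * b3)) in
  derivable_pt_lim (fun p => tau (xx p) (tt p)) p0 ph /\
  derivable_pt_lim (fun p => tt p - tau (xx p) (tt p)) p0 (al - ph) /\
  derivable_pt_lim (fun p => / (tt p - tau (xx p) (tt p)) * (c1 (xx p) - c1 (r2 (tau (xx p) (tt p))))) p0
     (u * (b1 - c1 vv * ph) - u * (al - ph) * c1 e) /\
  derivable_pt_lim (fun p => / (tt p - tau (xx p) (tt p)) * (c2 (xx p) - c2 (r2 (tau (xx p) (tt p))))) p0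
     (u * (b2 - c2 vv * ph) - u * (al - ph) * c2 e).
Proof.
  intros adm ret tt xx t0 y1 y2 y3 p0 al b1 b2 b3 Htt Hxx HT z u e vv ph.
  pose proof adm as [[D1 _] [[D2 _] [[D3 _] _]]].
  assert (Hph : derivable_pt_lim (fun p => tau (xx p) (tt p)) p0 ph).
  { exact (core r2 v a j tau adm ret tt xx t0 y1 y2 y3 p0 al b1 b2 b3 Htt Hxx HT). }
  assert (Htp : tt p0 = t0) by (rewrite Htt; ring).
  assert (Hxp : xx p0 = mkR3 y1 y2 y3) by (rewrite Hxx; f_equal; ring).
  assert (Hs0 : tau (xx p0) (tt p0) = tauF tau t0 y1 y2 y3) by (rewrite Htp, Hxp; reflexivity).
  assert (Dtt : derivable_pt_lim tt p0 al).
  { apply (dpl_ext (fun p => t0 + al * (p - p0))). intros; auto. apply daff. }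
  assert (HT2 : derivable_pt_lim (fun p => tt p - tau (xx p) (tt p)) p0 (al - ph)).
  { apply (derivable_pt_lim_minus tt (fun p => tau (xx p) (tt p))); auto. }
  assert (HTne : tt p0 - tau (xx p0) (tt p0) <> 0).
  { rewrite Hs0, Htp. unfold TF, tauF in *. lra. }
  assert (Hu : u = / (tt p0 - tau (xx p0) (tt p0))) by (rewrite Hs0, Htp; reflexivity).
  assert (gen : forall (cc : R3 -> R) yk bk,
    (forall p, cc (xx p) = yk + bk * (p - p0)) ->
    (forall t, derivable_pt_lim (fun t => cc (r2 t)) t (cc (v t))) ->
    cc e = u * (yk - cc (r2 (tauF tau t0 y1 y2 y3))) ->
    derivable_pt_lim (fun p => / (tt p - tau (xx p) (tt p)) * (cc (xx p) - cc (r2 (tau (xx p) (tt p))))) p0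
     (u * (bk - cc vv * ph) - u * (al - ph) * cc e)).
  { intros cc yk bk Hc Dc Hce.
    assert (DX : derivable_pt_lim (fun p => cc (xx p) - cc (r2 (tau (xx p) (tt p)))) p0 (bk - cc vv * ph)).
    { apply (derivable_pt_lim_minus (fun p => cc (xx p)) (fun p => cc (r2 (tau (xx p) (tt p))))).
      apply (dpl_ext (fun p => yk + bk * (p - p0))). intros; auto. apply daff.
      apply (derivable_pt_lim_comp (fun p => tau (xx p) (tt p)) (fun t => cc (r2 t))). auto.
      rewrite Hs0. apply Dc. }
    pose proof (derivable_pt_lim_div _ _ _ _ _ DX HT2 HTne) as H.
    apply (dpl_ext _ _ _ _ (fun y => ltac:(unfold div_fct, Rdiv; apply Rmult_comm))) in H.
    eapply dpl_val. exact H.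
    rewrite Hce. rewrite Hu. rewrite Hc. rewrite Hs0. rewrite !Htp. unfold Rsqr.
    replace (yk + bk * (p0 - p0)) with yk by ring. field.
    rewrite Hs0, Htp in HTne; auto. }
  split; [|split; [|split]]; auto.
  - apply gen with (yk := y1); auto. intros; rewrite Hxx; reflexivity.
  - apply gen with (yk := y2); auto. intros; rewrite Hxx; reflexivity.
Qed.

Definition dal (k : nat) : R := match k with O => 1 | _ => 0 end.
Definition db1 (k : nat) : R := match k with 1%nat => 1 | _ => 0 end.
Definition db2 (k : nat) : R := match k with 2%nat => 1 | _ => 0 end.
Definition db3 (k : nat) : R := match k with 3%nat => 1 | _ => 0 end.

Definition Jmat (z u : R) (e vv : R3) (i k : nat) : R :=
  let ph := z * (dal k - (c1 e * db1 k + c2 e * db2 k + c3 e * db3 k)) in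
  match i with
  | O => ph
  | 1%nat => dal k - ph
  | 2%nat => u * (db1 k - c1 vv * ph) - u * (dal k - ph) * c1 e
  | 3%nat => u * (db2 k - c2 vv * ph) - u * (dal k - ph) * c2 e
  | _ => 0
  end.

Theorem mainTheorem6 (r2 v a j : R -> R3) (tau : R3 -> R -> R) :
  admissible r2 v a j ->
  is_retarded_time r2 tau ->
  forall t x1 x2 x3 : R,
    TF tau t x1 x2 x3 > 0 ->
    exists J : nat -> nat -> R,
      (forall i k : nat, (i < 4)%nat -> (k < 4)%nat ->
         partial4 (jacF r2 tau i) k t x1 x2 x3 (J i k)) /\
      det4 J = zF r2 v tau t x1 x2 x3 * (uF tau t x1 x2 x3) ^ 2
               * c3 (eF r2 tau t x1 x2 x3).
Proof.
  intros adm ret t x1 x2 x3 HT.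
  exists (Jmat (zF r2 v tau t x1 x2 x3) (uF tau t x1 x2 x3) (eF r2 tau t x1 x2 x3)
            (v (tauF tau t x1 x2 x3))).
  split.
  - intros i k Hi Hk.
    destruct k as [|[|[|[|k]]]]; try lia.
    + destruct (dir_all r2 v a j tau adm ret (fun p => p) (fun _ => mkR3 x1 x2 x3) t x1 x2 x3 t 1 0 0 0
        ltac:(intros; cbv beta; ring) ltac:(intros; cbv beta; f_equal; ring) HT) as [H0 [H1 [H2 H3]]].
      destruct i as [|[|[|[|i]]]]; try lia; [exact H0|exact H1|exact H2|exact H3].
    + destruct (dir_all r2 v a j tau adm ret (fun _ => t) (fun p => mkR3 p x2 x3) t x1 x2 x3 x1 0 1 0 0
        ltac:(intros; cbv beta; ring) ltac:(intros; cbv beta; f_equal; ring) HT) as [H0 [H1 [H2 H3]]].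
      destruct i as [|[|[|[|i]]]]; try lia; [exact H0|exact H1|exact H2|exact H3].
    + destruct (dir_all r2 v a j tau adm ret (fun _ => t) (fun p => mkR3 x1 p x3) t x1 x2 x3 x2 0 0 1 0
        ltac:(intros; cbv beta; ring) ltac:(intros; cbv beta; f_equal; ring) HT) as [H0 [H1 [H2 H3]]].
      destruct i as [|[|[|[|i]]]]; try lia; [exact H0|exact H1|exact H2|exact H3].
    + destruct (dir_all r2 v a j tau adm ret (fun _ => t) (fun p => mkR3 x1 x2 p) t x1 x2 x3 x3 0 0 0 1
        ltac:(intros; cbv beta; ring) ltac:(intros; cbv beta; f_equal; ring) HT) as [H0 [H1 [H2 H3]]].
      destruct i as [|[|[|[|i]]]]; try lia; [exact H0|exact H1|exact H2|exact H3].
  - unfold det4, det3, Jmat, dal, db1, db2, db3. ring.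
Qed.
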